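(* Let $G=(X,\Sigma,\longrightarrow,X_0)$ and $R=(Z,\Sigma,\longrightarrow,Z_0)$ be automata. For any $\Sigma_{ucr}$-controllability set $E$ from $G$ to $R$, $\mathcal{A}(E)\in\mathit{SPR}(G,R)$; i.e., $\mathcal{A}(E)$ is $\Sigma_{uc}$-admissible w.r.t. $G$ and $\mathcal{A}(E)\|G\sqsubseteq_{cc}R$.
   Context: An automaton is a 4-tuple $A=(Q,\Sigma,\longrightarrow,Q_0)$ with state set $Q$, finite event set $\Sigma$, ${\longrightarrow}\subseteq Q\times\Sigma\times Q$ and $\emptyset\neq Q_0\subseteq Q$. Write $q\xrightarrow{\sigma}q'$ for $(q,\sigma,q')\in{\longrightarrow}$, $q\xrightarrow{\sigma}$ if some such $q'$ exists; extend to strings. A state is reachable if it is reached from an initial state by some string. Events are partitioned into uncontrollable $\Sigma_{uc}$ and controllable $\Sigma_c$; $\Sigma_r\subseteq\Sigma$ is a fixed set of required events. For a supervisor $S=(Y,\Sigma,\longrightarrow,Y_0)$, $S\|G=(Y\times X,\Sigma,\longrightarrow,Y_0\times X_0)$ with $(y,x)\xrightarrow{\sigma}(y',x')$ iff $y\xrightarrow{\sigma}y'$ and $x\xrightarrow{\sigma}x'$. $S$ is $\Sigma_{uc}$-admissible w.r.t. $G$ if for every reachable $(y,x)$ of $S\|G$ and $\sigma\in\Sigma_{uc}$, $x\xrightarrow{\sigma}$ implies $(y,x)\xrightarrow{\sigma}$. For automata $A_1,A_2$ with state sets $Q_1,Q_2$ and initial sets $Q_{01},Q_{02}$, $\Phi\subseteq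 Q_1\times Q_2$ is a cc-simulation if (initial state) every $q_0\in Q_{01}$ has $p_0\in Q_{02}$ with $(q_0,p_0)\in\Phi$; (forward) for $(q,p)\in\Phi$, $\sigma\in\Sigma$, $q\xrightarrow{\sigma}q'$ there is $p'$ with $p\xrightarrow{\sigma}p'$, $(q',p')\in\Phi$; ($\Sigma_r$-backward) for $(q,p)\in\Phi$, $\sigma\in\Sigma_r$, $p\xrightarrow{\sigma}p'$ there is $q'$ with $q\xrightarrow{\sigma}q'$, $(q',p')\in\Phi$. $A_1\sqsubseteq_{cc}A_2$ means one exists. $\mathit{SPR}(G,R)$ is the set of $\Sigma_{uc}$-admissible supervisors $S$ with $S\|G\sqsubseteq_{cc}R$. For $W,W'\subseteq X\times Z$: $\mathit{match}_{G,R}(W,\sigma,W')$ iff for all $(x,z)\in W$ and $x\xrightarrow{\sigma}x'$ there is $z'$ with $z\xrightarrow{\sigma}z'$ and $(x',z')\in W'$. $E\subseteq\wp(X\times Z)$ is a $\Sigma_{ucr}$-controllability set from $G$ to $R$ if: (istate) some $W_0\in E$ satisfies $\forall x_0\in X_0\,\exists z_0\in Z_0\,((x_0,z_0)\in W_0)$; (a) for every $W\in E$, $\sigma\in\Sigma_{uc}$ there is $W'\in E$ with $\mathit{match}_{G,R}(W,\sigma,W')$; (b) for every $W\in E$, $(x,z)\in W$, $\sigma\in\Sigma_r$, $z\xrightarrow{\sigma}z'$, there exist $x'$, $W'\in E$ with $x\xrightarrow{\sigma}x'$, $(x',z')\in W'$, $\mathit{match}_{G,R}(W,\sigma,W')$.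 For such $E$, $E^*=\bigcup_{\widetilde W\in E}\wp(\widetilde W)$, $\mathrm{Succ}_\sigma(W)=\bigcup_{(x,z)\in W}\{x':x\xrightarrow{\sigma}x'\}\times\{z':z\xrightarrow{\sigma}z'\}$, and $\mathcal{A}(E)=(E^*,\Sigma,\longrightarrow,I_E)$ with $I_E=\{W_0\in E^*:\forall x_0\in X_0\,\exists z_0\in Z_0\,((x_0,z_0)\in W_0)\text{ and }W_0\subseteq X_0\times Z_0\}$ and $W\xrightarrow{\sigma}W'$ iff (i) there exist $(x,z)\in W$, $(x',z')\in W'$ with $x\xrightarrow{\sigma}x'$, $z\xrightarrow{\sigma}z'$; (ii) $\mathit{match}_{G,R}(W,\sigma,W')$; (iii) $W'\subseteq\mathrm{Succ}_\sigma(W)$. *)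

(* Defs.v *)
From mathcomp Require Import all_boot.

(* An automaton (Q, Sigma, -->, Q0); nonemptiness of Q0 is stated separately
   via [is_automaton]. Subsets are Prop-valued predicates. *)
Record automaton (Sigma : Type) := Automaton {
  state : Type;
  trans : state -> Sigma -> state -> Prop;
  init  : state -> Prop }.

Arguments Automaton {Sigma} state trans init.
Arguments state {Sigma} a.
Arguments trans {Sigma} a _ _ _.
Arguments init {Sigma} a _.

Definition is_automaton (Sigma : Type) (A : automaton Sigma) : Prop :=
  exists q, init A q.

Inductive trans_str (Sigma : Type) (A : automaton Sigma) :
  state A -> seq Sigma -> state A -> Prop :=
| ts_nil q : trans_str Sigma A q [::] q
| ts_cons q s q' w q'' :
    trans A q s q' -> trans_str Sigma A q' w q'' -> trans_str Sigma A q (s :: w) q''.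

Definition reachable (Sigma : Type) (A : automaton Sigma) (q : state A) : Prop :=
  exists q0 w, init A q0 /\ trans_str Sigma A q0 w q.

Definition sync (Sigma : Type) (S G : automaton Sigma) : automaton Sigma :=
  Automaton (state S * state G)%type
    (fun p s p' => trans S p.1 s p'.1 /\ trans G p.2 s p'.2)
    (fun p => init S p.1 /\ init G p.2).

Definition admissible (Sigma : Type) (uc : Sigma -> Prop)
    (S G : automaton Sigma) : Prop :=
  forall (p : state (sync Sigma S G)), reachable Sigma (sync Sigma S G) p ->
  forall s, uc s -> (exists x', trans G p.2 s x') ->
  exists p', trans (sync Sigma S G) p s p'.

Definition cc_simulation (Sigma : Type) (r : Sigma -> Prop)
    (A1 A2 : automaton Sigma) (Phi : state A1 -> state A2 -> Prop) : Prop :=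
  (forall q0, init A1 q0 -> exists p0, init A2 p0 /\ Phi q0 p0) /\
  (forall q p, Phi q p -> forall s q', trans A1 q s q' ->
     exists p', trans A2 p s p' /\ Phi q' p') /\
  (forall q p, Phi q p -> forall s, r s -> forall p', trans A2 p s p' ->
     exists q', trans A1 q s q' /\ Phi q' p').

Definition cc_le (Sigma : Type) (r : Sigma -> Prop) (A1 A2 : automaton Sigma) : Prop :=
  exists Phi, cc_simulation Sigma r A1 A2 Phi.

Definition SPR (Sigma : Type) (uc r : Sigma -> Prop)
    (G R : automaton Sigma) (S : automaton Sigma) : Prop :=
  is_automaton Sigma S /\ admissible Sigma uc S G /\ cc_le Sigma r (sync Sigma S G) R.

Section Ctrl.
Variables (Sigma : Type) (G R : automaton Sigma).
Local Notation X := (state G).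
Local Notation Z := (state R).

Definition rel_set := (X * Z)%type -> Prop.

Definition match_GR (W : rel_set) (s : Sigma) (W' : rel_set) : Prop :=
  forall x z, W (x, z) -> forall x', trans G x s x' ->
  exists z', trans R z s z' /\ W' (x', z').

Definition controllability_set (uc r : Sigma -> Prop) (E : rel_set -> Prop) : Prop :=
  (exists W0, E W0 /\ forall x0, init G x0 -> exists z0, init R z0 /\ W0 (x0, z0)) /\
  (forall W, E W -> forall s, uc s -> exists W', E W' /\ match_GR W s W') /\
  (forall W, E W -> forall x z, W (x, z) -> forall s, r s -> forall z',
     trans R z s z' ->
     exists x' W', trans G x s x' /\ E W' /\ W' (x', z') /\ match_GR W s W').

Definition Estar (E : rel_set -> Prop) (W : rel_set) : Prop :=
  exists Wt, E Wt /\ forall p, W p -> Wt p.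

Definition Succ (W : rel_set) (s : Sigma) : rel_set :=
  fun p => exists x z, W (x, z) /\ trans G x s p.1 /\ trans R z s p.2.

Definition AE (E : rel_set -> Prop) : automaton Sigma :=
  Automaton {W : rel_set | Estar E W}
    (fun W s W' =>
       (exists x z x' z', proj1_sig W (x, z) /\ proj1_sig W' (x', z') /\
                          trans G x s x' /\ trans R z s z') /\
       match_GR (proj1_sig W) s (proj1_sig W') /\
       (forall p, proj1_sig W' p -> Succ (proj1_sig W) s p))
    (fun W =>
       (forall x0, init G x0 -> exists z0, init R z0 /\ proj1_sig W (x0, z0)) /\
       (forall p, proj1_sig W p -> init G p.1 /\ init R p.2)).
End Ctrl.
Arguments is_automaton {Sigma} A.
Arguments reachable {Sigma} A q.
Arguments sync {Sigma} S G.
Arguments admissible {Sigma} uc S G.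
Arguments cc_simulation {Sigma} r A1 A2 Phi.
Arguments cc_le {Sigma} r A1 A2.
Arguments SPR {Sigma} uc r G R S.
Arguments rel_set {Sigma} G R.
Arguments match_GR {Sigma} G R W s W'.
Arguments controllability_set {Sigma} G R uc r E.
Arguments Estar {Sigma} G R E W.
Arguments Succ {Sigma} G R W s _.
Arguments AE {Sigma} G R E.

(* Main.v *)
Require Import Defs.
From mathcomp Require Import all_boot.

Lemma reach_inv (Sigma : finType) (G R : automaton Sigma) (E : rel_set G R -> Prop) :
  forall p, reachable (sync (AE G R E) G) p -> exists z, proj1_sig p.1 (p.2, z).
Proof.
  move=> p [q0 [w [Hi Ht]]].
  have [z Hz] : exists z, proj1_sig q0.1 (q0.2, z).
    case: Hi => [[H1 _] H2]. case: (H1 _ H2) => z [_ Hz]. by exists z.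
  elim: Ht z Hz => [q|q s q' w' q'' [[_ [Hm _]] Hg] _ IH] z Hz.
    by exists z.
  case: (Hm _ _ Hz _ Hg) => z' [_ Hz']. exact: (IH z' Hz').
Qed.

Theorem lemma3 (Sigma : finType) (uc r : Sigma -> Prop)
    (G R : automaton Sigma)
    (HG : is_automaton G) (HR : is_automaton R)
    (E : rel_set G R -> Prop)
    (HE : controllability_set G R uc r E) :
  SPR uc r G R (AE G R E).
Proof.
  case: HE => [[W0 [HW0 HW0i]] [Ha Hb]].
  split; [|split].
  - have Hs : Estar G R E (fun p => W0 p /\ init G p.1 /\ init R p.2).
      exists W0; split => // p []; done.
    exists (exist _ _ Hs); split => /=.
      move=> x0 Hx0; case: (HW0i _ Hx0) => z0 [Hz0 Hw]. by exists z0.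
    by move=> p [_ H].
  - move=> p Hp s Hs [x' Hx'].
    case: (@reach_inv _ _ _ E p Hp) => z Hz.
    case: p Hp Hz Hx' => [[W HW] x] /= _ Hz Hx'.
    case: HW => [Wt [HWt Hsub]].
    case: (Ha _ HWt s Hs) => W'' [HW'' Hm].
    have Hs' : Estar G R E (fun p => W'' p /\ Succ G R W s p).
      exists W''; split => // q []; done.
    exists (exist _ _ Hs', x') => /=; split => //; split; [|split].
    + case: (Hm _ _ (Hsub _ Hz) _ Hx') => z' [Hzz Hw].
      exists x, z, x', z'. split; first exact: Hz.
      split; first by split => //; exists x, z.
      by split.
    + move=> a b Hab a' Ha'. case: (Hm _ _ (Hsub _ Hab) _ Ha') => b' [Hbb Hw].
      exists b'; split => //; split => //. by exists a, b.
    + by move=> q [].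
  - exists (fun (p : state (sync (AE G R E) G)) (z : state R) => proj1_sig p.1 (p.2, z)).
    split; [|split].
    + move=> [W x] [[H1 _] Hx] /=. exact: H1.
    + move=> [W x] z /= Hz s [W' x'] [[_ [Hm _]] Hx] /=.
      exact: (Hm _ _ Hz _ Hx).
    + move=> [[W HW] x] z /= Hz s Hs z' Hzz.
      case: HW => [Wt [HWt Hsub]].
      case: (Hb _ HWt _ _ (Hsub _ Hz) s Hs _ Hzz) => x' [W'' [Hx [HW'' [Hw Hm]]]].
      have Hs' : Estar G R E (fun p => W'' p /\ Succ G R W s p).
        exists W''; split => // q []; done.
      exists (exist _ _ Hs', x'); split => /=; last first.
        split => //. by exists x, z.
      split => //; split; [|split].
      * exists x, z, x', z'. split; first exact: Hz.
        split; first by split => //; exists x, z.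
        by split.
      * move=> a b Hab a' Ha'. case: (Hm _ _ (Hsub _ Hab) _ Ha') => b' [Hbb Hw'].
        exists b'; split => //; split => //. by exists a, b.
      * by move=> q [].
Qed.
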